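(* Let $r\ge 2$, $t\ge 2$, and let $G$ be an $(r,t,a_0)$-staircase graph of girth at least $t+1$. Then $a_0\ge r+1$.
   Context: Staircase graph: Let $r\ge 2$ and $t\ge 2$ be integers, $s=\lfloor (t-1)/2\rfloor$, and $a_0$ a positive integer; if $t$ is odd assume $t\ge 3$. An $(r,t,a_0)$-staircase graph is a finite simple graph $G$ whose vertex set is a disjoint union $\{v_\infty\}\cup V_0\cup V_1\cup\cdots\cup V_s$ such that: $|V_0|=a_0$ and $v_\infty$ is adjacent to every vertex of $V_0$ and to no other vertex; for each $i$ with $0\le i\le s-1$ (if $t$ is even) or $0\le i\le s-2$ (if $t$ is odd), every vertex of $V_i$ has exactly $r$ neighbours in $V_{i+1}$ and every vertex of $V_{i+1}$ has exactly one neighbour in $V_i$; if $t$ is even, every vertex of $V_s$ has exactly $r$ neighbours in $V_s$; if $t$ is odd, every vertex of $V_{s-1}$ has exactly $r$ neighbours in $V_s$ and every vertex of $V_s$ has exactly $r+1$ neighbours in $V_{s-1}$; and there are no other edges. Girth: length of a shortest cycle ($\infty$ if there is none). *)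

(* Defs.v *)
From mathcomp Require Import all_boot.
Set Implicit Arguments. Unset Strict Implicit. Unset Printing Implicit Defensive.

Definition simple_graph (T : finType) (e : rel T) : Prop :=
  symmetric e /\ irreflexive e.

Definition girth_at_least (T : finType) (e : rel T) (g : nat) : Prop :=
  forall p : seq T, uniq p -> 3 <= size p -> cycle e p -> g <= size p.

Definition level_set (T : finType) (vinf : T) (lev : T -> nat) (i : nat)
  : {set T} := [set x | (x != vinf) && (lev x == i)].

Definition nbrs_in (T : finType) (e : rel T) (x : T) (A : {set T}) : nat :=
  #|[set y in A | e x y]|.

(* (r,t,a0)-staircase graph structure on (T,e): the vertex set is
   {vinf} ⊔ V_0 ⊔ ... ⊔ V_s, with V_i = level_set vinf lev i and s = (t-1)/2. *)
Definition staircase (T : finType) (e : rel T) (r t a0 : nat)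
  (vinf : T) (lev : T -> nat) : Prop :=
  let s := (t.-1)./2 in
  let V := level_set vinf lev in
      (forall x, x != vinf -> lev x <= s) /\
      (0 < a0 /\ #|V 0| = a0) /\
      (forall x, e vinf x = (x \in V 0)) /\
      (forall i, (if odd t then i.+1 < s else i < s) ->
         (forall x, x \in V i -> nbrs_in e x (V i.+1) = r) /\
         (forall y, y \in V i.+1 -> nbrs_in e y (V i) = 1)) /\
      (if odd t then
         (forall x, x \in V s.-1 -> nbrs_in e x (V s) = r) /\
         (forall y, y \in V s -> nbrs_in e y (V s.-1) = r.+1)
       else forall x, x \in V s -> nbrs_in e x (V s) = r) /\
      (forall x y, x != vinf -> y != vinf -> e x y ->
         [|| lev y == (lev x).+1, lev x == (lev y).+1 |
             [&& ~~ odd t, lev x == s & lev y == s]]).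

(* Main.v *)
Require Import Defs.
From mathcomp Require Import all_boot.
From mathcomp Require Import zify.
Set Implicit Arguments. Unset Strict Implicit.

Definition par (T : finType) (e : rel T) (vinf : T) (lev : T -> nat) (y : T) :=
  odflt y [pick z in level_set vinf lev (lev y).-1 | e y z].

Lemma inV (T : finType) (vinf : T) (lev : T -> nat) k y :
  (y \in level_set vinf lev k) = (y != vinf) && (lev y == k).
Proof. by rewrite inE. Qed.

Lemma par_spec (T : finType) (e : rel T) (vinf : T) (lev : T -> nat) k y :
  y \in level_set vinf lev k ->
  nbrs_in e y (level_set vinf lev k.-1) = 1 ->
  [/\ par e vinf lev y \in level_set vinf lev k.-1, e y (par e vinf lev y) &
      forall z, z \in level_set vinf lev k.-1 -> e y z -> z = par e vinf lev y].
Proof.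
rewrite inV => /andP [_ /eqP Hk] /eqP/cards1P [w Hw].
have Hm : forall z, (z \in level_set vinf lev k.-1) && e y z -> z = w.
  by move=> z Hz; apply/set1P; rewrite -Hw inE.
have Hw' : (w \in level_set vinf lev k.-1) && e y w.
  by have := set11 w; rewrite -Hw inE.
rewrite /par Hk; case: pickP => [z Hz|H]; last by have := H w; rewrite Hw'.
have -> := Hm z Hz; case/andP: Hw' => -> ->; split => // z' H1 H2.
by apply: Hm; rewrite H1 H2.
Qed.

Definition HPar (T : finType) (e : rel T) (vinf : T) (lev : T -> nat) K :=
  forall k, 0 < k <= K -> forall y, y \in level_set vinf lev k ->
    nbrs_in e y (level_set vinf lev k.-1) = 1.

Lemma anc_in (T : finType) (e : rel T) (vinf : T) (lev : T -> nat) K :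
  HPar e vinf lev K -> forall k, k <= K -> forall y,
  y \in level_set vinf lev k -> iter k (par e vinf lev) y \in level_set vinf lev 0.
Proof.
move=> HP; elim=> [|k IH] Hk y Hy //.
rewrite iterSr; apply: IH; first by lia.
by case: (par_spec Hy (HP k.+1 ltac:(lia) y Hy)).
Qed.

Lemma path_lemma (T : finType) (e : rel T) (vinf : T) (lev : T -> nat) K :
  symmetric e -> HPar e vinf lev K -> forall k, k <= K -> forall y z,
  y \in level_set vinf lev k -> z \in level_set vinf lev k -> y != z ->
  iter k (par e vinf lev) y = iter k (par e vinf lev) z ->
  exists q, [/\ path e y (rcons q z), uniq q, 0 < size q, size q < k.*2 &
     forall v, v \in q -> (v != vinf) && (lev v < k)].
Proof.
move=> Hsym HP; elim=> [|k IH] Hk y z Hy Hz Hyz Ha; first by move: Hyz; rewrite /= in Ha; rewrite Ha eqxx.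
case: (par_spec Hy (HP k.+1 ltac:(lia) y Hy)) => /= Hpy Hey _.
case: (par_spec Hz (HP k.+1 ltac:(lia) z Hz)) => /= Hpz Hez _.
set py := par e vinf lev y in Hpy Hey Ha *.
set pz := par e vinf lev z in Hpz Hez Ha *.
case: (eqVneq py pz) => Hp.
  exists [:: py]; split => //=.
  - by rewrite Hey -Hp in Hez *; rewrite Hsym Hez.
  - move=> v; rewrite inE => /eqP ->; move: Hpy; rewrite inV => /andP [A /eqP B]; rewrite A /=; by rewrite B.
rewrite !iterSr in Ha.
have [q [H1 H2 H3 H4 H5]] := IH ltac:(lia) py pz Hpy Hpz Hp Ha.
have Hnq : forall v, v \in level_set vinf lev k -> v \notin q.
  move=> v; rewrite inV => /andP [_ /eqP Hv]; apply/negP => /H5 /andP [_]; by rewrite Hv ltnn.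
exists (py :: rcons q pz); split.
- rewrite rcons_cons /= Hey /= rcons_path H1 /= last_rcons Hsym Hez; done.
- rewrite /= rcons_uniq H2 (Hnq _ Hpz) mem_rcons in_cons negb_or Hp (Hnq _ Hpy); done.
- by [].
- by rewrite /= size_rcons doubleS !ltnS.
- move=> v; rewrite in_cons mem_rcons in_cons => /orP [/eqP ->|/orP [/eqP ->|/H5]].
  + move: Hpy; rewrite inV => /andP [A /eqP B]; rewrite A /=; by rewrite B.
  + move: Hpz; rewrite inV => /andP [A /eqP B]; rewrite A /=; by rewrite B.
  + move=> /andP [A ?]; rewrite A /=; exact: ltnW.
Qed.

Lemma two_point (T : finType) (e : rel T) (vinf : T) (lev : T -> nat) K g k x y :
  symmetric e -> HPar e vinf lev K -> girth_at_least e g -> k <= K ->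
  x \in level_set vinf lev k -> y \in level_set vinf lev k -> x != y -> e x y ->
  iter k (par e vinf lev) x = iter k (par e vinf lev) y -> g <= k.*2.+1.
Proof.
move=> Hsym HP Hg Hk Hx Hy Hxy Ex Ha.
have [q [H1 H2 H3 H4 H5]] := path_lemma Hsym HP Hk Hx Hy Hxy Ha.
have Hnq : forall v, v \in level_set vinf lev k -> v \notin q.
  move=> v; rewrite inV => /andP [_ /eqP Hv]; apply/negP => /H5 /andP [_]; by rewrite Hv ltnn.
have := Hg (x :: rcons q y).
rewrite /= size_rcons rcons_uniq H2 (Hnq _ Hy) mem_rcons in_cons negb_or Hxy (Hnq _ Hx).
rewrite rcons_path H1 last_rcons Hsym Ex => /(_ isT) H; have := H ltac:(clear -H3; lia) isT; clear -H4; lia.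
Qed.

Lemma three_point (T : finType) (e : rel T) (vinf : T) (lev : T -> nat) K g k x y z :
  symmetric e -> HPar e vinf lev K -> girth_at_least e g -> k <= K ->
  x != vinf -> k <= lev x -> x != y -> x != z ->
  y \in level_set vinf lev k -> z \in level_set vinf lev k -> y != z -> e x y -> e x z ->
  iter k (par e vinf lev) y = iter k (par e vinf lev) z -> g <= k.*2.+2.
Proof.
move=> Hsym HP Hg Hk Hxv Hlx Hxy Hxz Hy Hz Hyz Ey Ez Ha.
have [q [H1 H2 H3 H4 H5]] := path_lemma Hsym HP Hk Hy Hz Hyz Ha.
have Hnq : forall v, k <= lev v -> v \notin q.
  move=> v Hv; apply/negP => /H5 /andP [_]; clear -Hv; lia.
have Hly : k <= lev y by move: Hy; rewrite inV => /andP [_ /eqP ->].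
have Hlz : k <= lev z by move: Hz; rewrite inV => /andP [_ /eqP ->].
have := Hg [:: x, y & rcons q z].
rewrite /= size_rcons !in_cons !mem_rcons !in_cons !negb_or Hxy Hxz (Hnq _ Hlx).
rewrite rcons_uniq H2 (Hnq _ Hlz) Hyz (Hnq _ Hly) /=.
rewrite Ey rcons_path H1 last_rcons Hsym Ez => /(_ isT) H.
have := H ltac:(clear; lia) isT; clear -H4; lia.
Qed.

Lemma nonempty_lev (T : finType) (e : rel T) (vinf : T) (lev : T -> nat) r M :
  (forall i, i < M -> forall x, x \in level_set vinf lev i ->
     nbrs_in e x (level_set vinf lev i.+1) = r) -> 0 < r ->
  (exists x, x \in level_set vinf lev 0) ->
  forall i, i <= M -> exists x, x \in level_set vinf lev i.
Proof.
move=> HR Hr H0; elim=> [|i IH] Hi //.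
have [x Hx] := IH ltac:(lia).
have := HR i ltac:(lia) x Hx; rewrite /nbrs_in => Hc.
have : 0 < #|[set y in level_set vinf lev i.+1 | e x y]| by rewrite Hc.
case/card_gt0P => y; rewrite inE => /andP [Hy _]; by exists y.
Qed.

Lemma nonempty_card (T : finType) (A : {set T}) : 0 < #|A| -> exists x, x \in A.
Proof. by case/card_gt0P => x Hx; exists x. Qed.

Theorem mainTheorem6 (T : finType) (e : rel T) (r t a0 : nat)
  (vinf : T) (lev : T -> nat) :
  2 <= r -> 2 <= t ->
  simple_graph e ->
  staircase e r t a0 vinf lev ->
  girth_at_least e t.+1 ->
  r.+1 <= a0.
Proof.
move=> Hr Ht [Hsym Hirr]; rewrite /staircase.
set s := (t.-1)./2.
set V := level_set vinf lev.
move=> [Hlev [[Ha0 HV0] [Hvinf [Htree [Htop Hno]]]]] Hg.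
have HV0n : exists x, x \in V 0 by apply: nonempty_card; rewrite HV0.
case Hodd: (odd t) in Htree Htop.
-
  have Hts : t = s.*2.+1.
    have K : forall u, 2 <= u -> odd u -> u = (u.-1)./2.*2.+1.
      case=> // t' _ /= Ho; have := odd_double_half t'; rewrite (negbTE Ho); lia.
    exact: K.
  have Hs : 0 < s by lia.
  have HP : HPar e vinf lev s.-1.
    move=> k Hk y Hy; have := (Htree k.-1 ltac:(lia)).2 y.
    have -> : k.-1.+1 = k by lia.
    by move=> /(_ Hy).
  have HR : forall i, i < s.-1 -> forall x, x \in V i -> nbrs_in e x (V i.+1) = r.
    by move=> i Hi; apply: (Htree i ltac:(lia)).1.
  have [x1 Hx1] := nonempty_lev HR ltac:(lia) HV0n (leqnn _).
  have := Htop.1 x1 Hx1; rewrite /nbrs_in => Hc.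
  have [x Hx] : exists x, x \in V s.
    have : 0 < #|[set y in V s | e x1 y]| by rewrite Hc; lia.
    by case/card_gt0P => y; rewrite inE => /andP [Hy _]; exists y.
  set S := [set y in V s.-1 | e x y].
  have HS : #|S| = r.+1 by apply: Htop.2.
  set f := iter s.-1 (par e vinf lev).
  have Hsub : f @: S \subset V 0.
    apply/subsetP => w /imsetP [y]; rewrite inE => /andP [Hy _] ->.
    exact: (anc_in HP (leqnn _) Hy).
  have Hinj : {in S &, injective f}.
    move=> a b; move=> /setIdP [Ha Ea] /setIdP [Hb Eb] Hf.
    case: (eqVneq a b) => // Hab; exfalso.
    move: Hx; rewrite /V inV => /andP [Hxv /eqP Hlx].
    have Hxa : x != a.
      by apply/eqP => E; move: Ha; rewrite -E /V inV Hlx; case/andP => _ /eqP; clear -Hs; lia.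
    have Hxb : x != b.
      by apply/eqP => E; move: Hb; rewrite -E /V inV Hlx; case/andP => _ /eqP; clear -Hs; lia.
    have := three_point Hsym HP Hg (leqnn _) Hxv ltac:(clear -Hlx; lia) Hxa Hxb Ha Hb Hab Ea Eb Hf.
    clear -Hts Hs; lia.
  have := subset_leq_card Hsub; rewrite card_in_imset // HS HV0 //.
-
  have Hts : t = s.*2.+2.
    have K : forall u, 2 <= u -> odd u = false -> u = (u.-1)./2.*2.+2.
      case=> // t' _ /= Ho; have := odd_double_half t'; rewrite (negbNE (negbT Ho)); lia.
    exact: K.
  have HP : HPar e vinf lev s.
    move=> k Hk y Hy; have := (Htree k.-1 ltac:(lia)).2 y.
    have -> : k.-1.+1 = k by lia.
    by move=> /(_ Hy).
  have HR : forall i, i < s -> forall x, x \in V i -> nbrs_in e x (V i.+1) = r.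
    by move=> i Hi; apply: (Htree i Hi).1.
  have [x Hx] := nonempty_lev HR ltac:(lia) HV0n (leqnn _).
  set N := [set y in V s | e x y].
  have HN : #|N| = r by apply: Htop.
  have HxN : x \notin N by rewrite inE Hirr andbF.
  set S := x |: N.
  have HS : #|S| = r.+1 by rewrite cardsU1 HxN HN.
  set f := iter s (par e vinf lev).
  have Hsub : f @: S \subset V 0.
    apply/subsetP => w /imsetP [y Hy ->]; apply: (anc_in HP (leqnn _)).
    by case/setU1P: Hy => [->|/setIdP [Hy _]].
  have Hinj : {in S &, injective f}.
    move=> a b Ha Hb Hf.
    case: (eqVneq a b) => // Hab; exfalso.
    have Hx' := Hx; move: Hx'; rewrite /V inV => /andP [Hxv /eqP Hlx].
    move: Ha Hb => /setU1P [Eax|/setIdP [Ha Ea]] /setU1P [Ebx|/setIdP [Hb Eb]].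
    + by rewrite Eax Ebx eqxx in Hab.
    + subst a.
      have := two_point Hsym HP Hg (leqnn _) Hx Hb Hab Eb Hf; clear -Hts; lia.
    + subst b.
      have Hxa : x != a by rewrite eq_sym.
      have := two_point Hsym HP Hg (leqnn _) Hx Ha Hxa Ea (esym Hf); clear -Hts; lia.
    + have Hxa : x != a by apply/eqP => E; rewrite -E Hirr in Ea.
      have Hxb : x != b by apply/eqP => E; rewrite -E Hirr in Eb.
      have := three_point Hsym HP Hg (leqnn _) Hxv ltac:(clear -Hlx; lia) Hxa Hxb Ha Hb Hab Ea Eb Hf.
      clear -Hts; lia.
  have := subset_leq_card Hsub; rewrite card_in_imset // HS HV0 //.
Qed.
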